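(* A sequent $\Gamma\Rightarrow\Delta$ (of formulas of $\mathcal{L}^\Box$) is derivable in $\mathsf{S.ConstCK}^\Box$ if and only if $\iota(\Gamma\Rightarrow\Delta)$ is derivable in $\mathsf{ConstCK}^\Box$.
   Context: Language $\mathcal{L}^\Box$: formulas $\varphi ::= p \mid \bot \mid \varphi\wedge\varphi \mid \varphi\vee\varphi \mid \varphi\to\varphi \mid \varphi \mathrel{\Box\!\!\to} \varphi$; $\neg\varphi:=\varphi\to\bot$, $\top:=\neg\bot$, $\varphi\leftrightarrow\psi:=(\varphi\to\psi)\wedge(\psi\to\varphi)$. $\mathsf{ConstCK}^\Box$: any axiomatisation of intuitionistic propositional logic in $\mathcal{L}^\Box$ with modus ponens, plus RA$_\Box$: from $\varphi\leftrightarrow\rho$ infer $(\varphi\mathrel{\Box\!\!\to}\psi)\leftrightarrow(\rho\mathrel{\Box\!\!\to}\psi)$; RC$_\Box$: from $\psi\leftrightarrow\chi$ infer $(\varphi\mathrel{\Box\!\!\to}\psi)\leftrightarrow(\varphi\mathrel{\Box\!\!\to}\chi)$; CM$_\Box$: $(\varphi\mathrel{\Box\!\!\to}\psi\wedge\chi)\to(\varphi\mathrel{\Box\!\!\to}\psi)\wedge(\varphi\mathrel{\Box\!\!\to}\chi)$; CC$_\Box$: $(\varphi\mathrel{\Box\!\!\to}\psi)\wedge(\varphi\mathrel{\Box\!\!\to}\chi)\to(\varphi\mathrel{\Box\!\!\to}\psi\wedge\chi)$; CN$_\Box$: $\varphi\mathrel{\Box\!\!\to}\top$. A sequent $\Gamma\Rightarrow\Delta$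 is a pair of finite multisets of formulas with $|\Delta|\le1$; $\varphi\Leftrightarrow\rho$ abbreviates $\varphi\Rightarrow\rho$ and $\rho\Rightarrow\varphi$. $\iota(\Gamma\Rightarrow\Delta)=\bigwedge\Gamma\to\bigvee\Delta$ if $\Gamma\ne\emptyset$, $\bigvee\Delta$ otherwise, with $\bigvee\emptyset=\bot$. Rules of $\mathsf{S.ConstCK}^\Box$ (premisses / conclusion, $0\le|\Delta|\le1$, $n\ge0$): init: $\Gamma,p\Rightarrow p$; $\bot_L$: $\Gamma,\bot\Rightarrow\Delta$; $\wedge_L$: $\Gamma,\varphi,\psi\Rightarrow\Delta$ / $\Gamma,\varphi\wedge\psi\Rightarrow\Delta$; $\wedge_R$: $\Gamma\Rightarrow\varphi$, $\Gamma\Rightarrow\psi$ / $\Gamma\Rightarrow\varphi\wedge\psi$; $\vee_L$: $\Gamma,\varphi\Rightarrow\Delta$, $\Gamma,\psi\Rightarrow\Delta$ / $\Gamma,\varphi\vee\psi\Rightarrow\Delta$; $\vee_R^1$: $\Gamma\Rightarrow\varphi$ / $\Gamma\Rightarrow\varphi\vee\psi$; $\vee_R^2$: $\Gamma\Rightarrow\psi$ / $\Gamma\Rightarrow\varphi\vee\psi$; $\to_R$: $\Gamma,\varphi\Rightarrow\psi$ / $\Gamma\Rightarrow\varphi\to\psi$; $\to_L$: $\Gamma,\varphi\to\psi\Rightarrow\varphi$, $\Gamma,\psi\Rightarrow\Delta$ / $\Gamma,\varphi\to\psi\Rightarrow\Delta$; $\Box$: $\{\varphi\Leftrightarrow\rho_i\}_{i\le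 n}$, $\sigma_1,\dots,\sigma_n\Rightarrow\psi$ / $\Gamma,\rho_1\mathrel{\Box\!\!\to}\sigma_1,\dots,\rho_n\mathrel{\Box\!\!\to}\sigma_n\Rightarrow\varphi\mathrel{\Box\!\!\to}\psi$. *)

(* Defs.v *)
From Stdlib Require Import List Permutation.
Import ListNotations.

Inductive formula : Type :=
| Var : nat -> formula
| Bot : formula
| And : formula -> formula -> formula
| Or  : formula -> formula -> formula
| Imp : formula -> formula -> formula
| SImp : formula -> formula -> formula.

Definition Neg (a : formula) : formula := Imp a Bot.
Definition Top : formula := Neg Bot.
Definition Iff (a b : formula) : formula := And (Imp a b) (Imp b a).

Inductive HDer : formula -> Prop :=
| A1 a b : HDer (Imp a (Imp b a))
| A2 a b c : HDer (Imp (Imp a (Imp b c)) (Imp (Imp a b) (Imp a c)))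
| A3 a b : HDer (Imp (And a b) a)
| A4 a b : HDer (Imp (And a b) b)
| A5 a b : HDer (Imp a (Imp b (And a b)))
| A6 a b : HDer (Imp a (Or a b))
| A7 a b : HDer (Imp b (Or a b))
| A8 a b c : HDer (Imp (Imp a c) (Imp (Imp b c) (Imp (Or a b) c)))
| A9 a : HDer (Imp Bot a)
| MP a b : HDer (Imp a b) -> HDer a -> HDer b
| RA a r b : HDer (Iff a r) -> HDer (Iff (SImp a b) (SImp r b))
| RC a b c : HDer (Iff b c) -> HDer (Iff (SImp a b) (SImp a c))
| CM a b c : HDer (Imp (SImp a (And b c)) (And (SImp a b) (SImp a c)))
| CC a b c : HDer (Imp (And (SImp a b) (SImp a c)) (SImp a (And b c)))
| CN a : HDer (SImp a Top).

(* Sequents: finite multisets are represented by lists taken up to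
   permutation (every rule conclusion is stated modulo Permutation);
   the succedent (|Delta| <= 1) is an option formula. *)
Inductive SDer : list formula -> option formula -> Prop :=
| S_init G G' p :
    Permutation G' (Var p :: G) -> SDer G' (Some (Var p))
| S_botL G G' D :
    Permutation G' (Bot :: G) -> SDer G' D
| S_andL G G' a b D :
    Permutation G' (And a b :: G) -> SDer (a :: b :: G) D -> SDer G' D
| S_andR G a b :
    SDer G (Some a) -> SDer G (Some b) -> SDer G (Some (And a b))
| S_orL G G' a b D :
    Permutation G' (Or a b :: G) ->
    SDer (a :: G) D -> SDer (b :: G) D -> SDer G' D
| S_orR1 G a b : SDer G (Some a) -> SDer G (Some (Or a b))
| S_orR2 G a b : SDer G (Some b) -> SDer G (Some (Or a b))
| S_impR G a b : SDer (a :: G) (Some b) -> SDer G (Some (Imp a b))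
| S_impL G G' a b D :
    Permutation G' (Imp a b :: G) ->
    SDer (Imp a b :: G) (Some a) -> SDer (b :: G) D -> SDer G' D
| S_box G G' (l : list (formula * formula)) a b :
    Permutation G' (map (fun rs => SImp (fst rs) (snd rs)) l ++ G) ->
    (forall rs, In rs l -> SDer [a] (Some (fst rs)) /\ SDer [fst rs] (Some a)) ->
    SDer (map snd l) (Some b) ->
    SDer G' (Some (SImp a b)).

Fixpoint big_and (G : list formula) : formula :=
  match G with
  | [] => Top
  | [x] => x
  | x :: xs => And x (big_and xs)
  end.

Definition big_or (D : option formula) : formula :=
  match D with None => Bot | Some a => a end.

Definition iota (G : list formula) (D : option formula) : formula :=
  match G with
  | [] => big_or D
  | _ => Imp (big_and G) (big_or D)
  end.

(* Main.v *)
Require Import Defs.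
From Stdlib Require Import List Permutation Lia Arith.
Import ListNotations.


Definition fdec : forall x y : formula, {x = y} + {x <> y}.
Proof. decide equality; apply Nat.eq_dec. Qed.

Ltac psolve :=
  let z := fresh "z" in
  apply (proj2 (Permutation_count_occ fdec _ _)); intro z;
  repeat match goal with
  | H : Permutation _ _ |- _ =>
      let H' := fresh in
      pose proof (proj1 (Permutation_count_occ fdec _ _) H z) as H'; clear H; revert H'
  end;
  simpl; rewrite ?map_app, ?count_occ_app; simpl; rewrite ?count_occ_app;
  repeat (destruct (fdec _ _)); intros; lia.

Definition sim := fun rs : formula * formula => SImp (fst rs) (snd rs).

Inductive SDh : nat -> list formula -> option formula -> Prop :=
| h_init n G G' p : Permutation G' (Var p :: G) -> SDh n G' (Some (Var p))
| h_bot n G G' D : Permutation G' (Bot :: G) -> SDh n G' D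
| h_andL n G G' a b D : Permutation G' (And a b :: G) -> SDh n (a :: b :: G) D -> SDh (S n) G' D
| h_andR n G a b : SDh n G (Some a) -> SDh n G (Some b) -> SDh (S n) G (Some (And a b))
| h_orL n G G' a b D : Permutation G' (Or a b :: G) ->
    SDh n (a :: G) D -> SDh n (b :: G) D -> SDh (S n) G' D
| h_orR1 n G a b : SDh n G (Some a) -> SDh (S n) G (Some (Or a b))
| h_orR2 n G a b : SDh n G (Some b) -> SDh (S n) G (Some (Or a b))
| h_impR n G a b : SDh n (a :: G) (Some b) -> SDh (S n) G (Some (Imp a b))
| h_impL n G G' a b D : Permutation G' (Imp a b :: G) ->
    SDh n (Imp a b :: G) (Some a) -> SDh n (b :: G) D -> SDh (S n) G' D
| h_box n G G' (l : list (formula * formula)) a b :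
    Permutation G' (map sim l ++ G) ->
    (forall rs, In rs l -> SDer [a] (Some (fst rs)) /\ SDer [fst rs] (Some a)) ->
    SDh n (map snd l) (Some b) ->
    SDh (S n) G' (Some (SImp a b)).

Lemma perm_h n G D : SDh n G D -> forall G', Permutation G G' -> SDh n G' D.
Proof.
  induction 1; intros G2 HP.
  - eapply h_init. rewrite <- HP; eauto.
  - eapply h_bot. rewrite <- HP; eauto.
  - eapply h_andL; [rewrite <- HP; eauto | eauto].
  - apply h_andR; auto.
  - eapply h_orL; [rewrite <- HP; eauto | eauto | eauto].
  - apply h_orR1; auto.
  - apply h_orR2; auto.
  - apply h_impR; apply IHSDh; auto.
  - eapply h_impL; [rewrite <- HP; eauto | eauto | eauto].
  - eapply h_box; [rewrite <- HP; eauto | eauto | eauto].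
Qed.

Lemma lift_h n G D : SDh n G D -> SDh (S n) G D.
Proof.
  induction 1.
  - eapply h_init; eauto.
  - eapply h_bot; eauto.
  - eapply h_andL; eauto.
  - apply h_andR; auto.
  - eapply h_orL; eauto.
  - apply h_orR1; auto.
  - apply h_orR2; auto.
  - apply h_impR; auto.
  - eapply h_impL; eauto.
  - eapply h_box; eauto.
Qed.

Lemma le_h n m G D : n <= m -> SDh n G D -> SDh m G D.
Proof. induction 1; auto using lift_h. Qed.

Lemma wk_h n G D : SDh n G D -> forall X, SDh n (X :: G) D.
Proof.
  induction 1; intros X.
  - eapply h_init with (G := X :: G). psolve.
  - eapply h_bot with (G := X :: G). psolve.
  - eapply h_andL with (G := X :: G) (a:=a) (b:=b); [psolve|]. eapply perm_h; [apply (IHSDh X)|]. psolve.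
  - apply h_andR; auto.
  - eapply h_orL with (G := X :: G) (a:=a) (b:=b); [psolve| |].
    + eapply perm_h; [apply (IHSDh1 X)|]. psolve.
    + eapply perm_h; [apply (IHSDh2 X)|]. psolve.
  - apply h_orR1; auto.
  - apply h_orR2; auto.
  - apply h_impR. eapply perm_h; [apply (IHSDh X)|]. psolve.
  - eapply h_impL with (G := X :: G) (a:=a) (b:=b); [psolve| |].
    + eapply perm_h; [apply (IHSDh1 X)|]. psolve.
    + eapply perm_h; [apply (IHSDh2 X)|]. psolve.
  - eapply h_box with (G := X :: G) (l:=l); eauto. psolve.
Qed.

Lemma wkl_h n G D : SDh n G D -> forall L, SDh n (L ++ G) D.
Proof. intros H L; induction L; simpl; auto using wk_h. Qed.

Lemma h_to_S n G D : SDh n G D -> SDer G D.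
Proof.
  induction 1.
  - eapply S_init; eauto.
  - eapply S_botL; eauto.
  - eapply S_andL; eauto.
  - apply S_andR; auto.
  - eapply S_orL; eauto.
  - apply S_orR1; auto.
  - apply S_orR2; auto.
  - apply S_impR; auto.
  - eapply S_impL; eauto.
  - eapply S_box; eauto.
Qed.

Lemma S_to_h G D : SDer G D -> exists n, SDh n G D.
Proof.
  induction 1.
  - exists 0; eapply h_init; eauto.
  - exists 0; eapply h_bot; eauto.
  - destruct IHSDer as [n Hn]; exists (S n); eapply h_andL; eauto.
  - destruct IHSDer1 as [n Hn]; destruct IHSDer2 as [m Hm]; exists (S (max n m)).
    apply h_andR; [apply (le_h n) | apply (le_h m)]; auto; lia.
  - destruct IHSDer1 as [n Hn]; destruct IHSDer2 as [m Hm]; exists (S (max n m)).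
    eapply h_orL; eauto; [apply (le_h n) | apply (le_h m)]; auto; lia.
  - destruct IHSDer as [n Hn]; exists (S n); apply h_orR1; auto.
  - destruct IHSDer as [n Hn]; exists (S n); apply h_orR2; auto.
  - destruct IHSDer as [n Hn]; exists (S n); apply h_impR; auto.
  - destruct IHSDer1 as [n Hn]; destruct IHSDer2 as [m Hm]; exists (S (max n m)).
    eapply h_impL; eauto; [apply (le_h n) | apply (le_h m)]; auto; lia.
  - destruct IHSDer as [n Hn]; exists (S n); eapply h_box; eauto.
Qed.

Lemma P1 (A : formula) G X G1 : Permutation (A :: G) (X :: G1) ->
  (A = X /\ Permutation G G1) \/ (exists G0, Permutation G1 (A :: G0) /\ Permutation G (X :: G0)).
Proof.
  intros HP. destruct (fdec A X) as [<-|Hne].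
  - left; split; auto. eapply Permutation_cons_inv; eauto.
  - right. assert (Hin : In A G1).
    { assert (In A (X :: G1)) by (eapply Permutation_in; eauto; left; auto).
      destruct H; [congruence|auto]. }
    apply in_split in Hin as [L1 [L2 ->]].
    exists (L1 ++ L2). split.
    + apply Permutation_sym, Permutation_middle.
    + apply (Permutation_cons_inv (a := A)).
      rewrite HP. psolve.
Qed.

Lemma P2 (A : formula) G l G1 : Permutation (A :: G) (map sim l ++ G1) ->
  (exists G0, Permutation G1 (A :: G0) /\ Permutation G (map sim l ++ G0)) \/
  (exists rs l0, A = sim rs /\ Permutation l (rs :: l0) /\ Permutation G (map sim l0 ++ G1)).
Proof.
  intros HP.
  assert (Hin : In A (map sim l ++ G1)) by (eapply Permutation_in; eauto; left; auto).
  apply in_app_or in Hin as [Hin|Hin].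
  - right. apply in_map_iff in Hin as [rs [Hrs Hin]].
    apply in_split in Hin as [L1 [L2 ->]].
    exists rs, (L1 ++ L2). split; [auto|]. split.
    + apply Permutation_sym, Permutation_middle.
    + apply (Permutation_cons_inv (a := A)). rewrite HP. subst A. rewrite !map_app. simpl. psolve.
  - left. apply in_split in Hin as [L1 [L2 ->]].
    exists (L1 ++ L2). split.
    + apply Permutation_sym, Permutation_middle.
    + apply (Permutation_cons_inv (a := A)). rewrite HP. psolve.
Qed.

Ltac sp1 H :=
  let E := fresh "E" in let HH := fresh "HP" in let G0 := fresh "G0" in
  let H1 := fresh "HP" in let H2 := fresh "HP" in
  destruct (P1 _ _ _ _ H) as [[E HH] | [G0 [H1 H2]]].

Ltac sp2 H :=
  let G0 := fresh "G0" in let H1 := fresh "HP" in let H2 := fresh "HP" in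
  let rs := fresh "rs" in let l0 := fresh "l0" in let E := fresh "E" in
  destruct (P2 _ _ _ _ H) as [[G0 [H1 H2]] | [rs [l0 [E [H1 H2]]]]].

Lemma inv_and n G' D : SDh n G' D -> forall a b G, Permutation G' (And a b :: G) -> SDh n (a :: b :: G) D.
Proof.
  induction 1; intros x y GG HG.
  - assert (HQ : Permutation (And x y :: GG) (Var p :: G)) by (rewrite <- HG; auto).
    sp1 HQ; [discriminate|]. eapply h_init with (G := x :: y :: G0). psolve.
  - assert (HQ : Permutation (And x y :: GG) (Bot :: G)) by (rewrite <- HG; auto).
    sp1 HQ; [discriminate|]. eapply h_bot with (G := x :: y :: G0). psolve.
  - assert (HQ : Permutation (And x y :: GG) (And a b :: G)) by (rewrite <- HG; auto).
    sp1 HQ.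
    + injection E; intros; subst. eapply perm_h; [apply lift_h; eauto|]. psolve.
    + eapply h_andL with (G := x :: y :: G0) (a := a) (b := b); [psolve|].
      eapply perm_h; [apply (IHSDh x y (a :: b :: G0))|]; psolve.
  - apply h_andR; auto.
  - assert (HQ : Permutation (And x y :: GG) (Or a b :: G)) by (rewrite <- HG; auto).
    sp1 HQ; [discriminate|].
    eapply h_orL with (G := x :: y :: G0) (a := a) (b := b); [psolve| |].
    + eapply perm_h; [apply (IHSDh1 x y (a :: G0))|]; psolve.
    + eapply perm_h; [apply (IHSDh2 x y (b :: G0))|]; psolve.
  - apply h_orR1; auto.
  - apply h_orR2; auto.
  - apply h_impR. eapply perm_h; [apply (IHSDh x y (a :: GG))|]; psolve.
  - assert (HQ : Permutation (And x y :: GG) (Imp a b :: G)) by (rewrite <- HG; auto).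
    sp1 HQ; [discriminate|].
    eapply h_impL with (G := x :: y :: G0) (a := a) (b := b); [psolve| |].
    + eapply perm_h; [apply (IHSDh1 x y (Imp a b :: G0))|]; psolve.
    + eapply perm_h; [apply (IHSDh2 x y (b :: G0))|]; psolve.
  - assert (HQ : Permutation (And x y :: GG) (map sim l ++ G)) by (rewrite <- HG; auto).
    sp2 HQ; [|discriminate].
    eapply h_box with (G := x :: y :: G0) (l := l); eauto. psolve.
Qed.

Lemma inv_or n G' D : SDh n G' D -> forall a b G, Permutation G' (Or a b :: G) ->
  SDh n (a :: G) D /\ SDh n (b :: G) D.
Proof.
  induction 1; intros x y GG HG.
  - assert (HQ : Permutation (Or x y :: GG) (Var p :: G)) by (rewrite <- HG; auto).
    sp1 HQ; [discriminate|]. split; [eapply h_init with (G := x :: G0) | eapply h_init with (G := y :: G0)]; psolve.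
  - assert (HQ : Permutation (Or x y :: GG) (Bot :: G)) by (rewrite <- HG; auto).
    sp1 HQ; [discriminate|]. split; [eapply h_bot with (G := x :: G0) | eapply h_bot with (G := y :: G0)]; psolve.
  - assert (HQ : Permutation (Or x y :: GG) (And a b :: G)) by (rewrite <- HG; auto).
    sp1 HQ; [discriminate|].
    destruct (IHSDh x y (a :: b :: G0)) as [IH1 IH2]; [psolve|].
    split.
    + eapply h_andL with (G := x :: G0) (a := a) (b := b); [psolve|].
      eapply perm_h; [apply IH1|]; psolve.
    + eapply h_andL with (G := y :: G0) (a := a) (b := b); [psolve|].
      eapply perm_h; [apply IH2|]; psolve.
  - destruct (IHSDh1 x y GG HG); destruct (IHSDh2 x y GG HG); split; apply h_andR; auto.
  - assert (HQ : Permutation (Or x y :: GG) (Or a b :: G)) by (rewrite <- HG; auto).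
    sp1 HQ.
    + injection E; intros; subst. split; [eapply perm_h; [apply lift_h; exact H0|] | eapply perm_h; [apply lift_h; exact H1|]]; psolve.
    + destruct (IHSDh1 x y (a :: G0)) as [IH1 IH2]; [psolve|].
      destruct (IHSDh2 x y (b :: G0)) as [IH3 IH4]; [psolve|].
      split.
      * eapply h_orL with (G := x :: G0) (a := a) (b := b); [psolve| |].
        -- eapply perm_h; [apply IH1|]; psolve.
        -- eapply perm_h; [apply IH3|]; psolve.
      * eapply h_orL with (G := y :: G0) (a := a) (b := b); [psolve| |].
        -- eapply perm_h; [apply IH2|]; psolve.
        -- eapply perm_h; [apply IH4|]; psolve.
  - destruct (IHSDh x y GG HG); split; apply h_orR1; auto.
  - destruct (IHSDh x y GG HG); split; apply h_orR2; auto.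
  - destruct (IHSDh x y (a :: GG)) as [IH1 IH2]; [psolve|].
    split; apply h_impR; [eapply perm_h; [exact IH1|] | eapply perm_h; [exact IH2|]]; psolve.
  - assert (HQ : Permutation (Or x y :: GG) (Imp a b :: G)) by (rewrite <- HG; auto).
    sp1 HQ; [discriminate|].
    destruct (IHSDh1 x y (Imp a b :: G0)) as [IH1 IH2]; [psolve|].
    destruct (IHSDh2 x y (b :: G0)) as [IH3 IH4]; [psolve|].
    split.
    * eapply h_impL with (G := x :: G0) (a := a) (b := b); [psolve| |].
      -- eapply perm_h; [apply IH1|]; psolve.
      -- eapply perm_h; [apply IH3|]; psolve.
    * eapply h_impL with (G := y :: G0) (a := a) (b := b); [psolve| |].
      -- eapply perm_h; [apply IH2|]; psolve.
      -- eapply perm_h; [apply IH4|]; psolve.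
  - assert (HQ : Permutation (Or x y :: GG) (map sim l ++ G)) by (rewrite <- HG; auto).
    sp2 HQ; [|discriminate].
    split; [eapply h_box with (G := x :: G0) (l := l) | eapply h_box with (G := y :: G0) (l := l)]; eauto; psolve.
Qed.

Lemma inv_impL n G' D : SDh n G' D -> forall a b G, Permutation G' (Imp a b :: G) -> SDh n (b :: G) D.
Proof.
  induction 1; intros x y GG HG.
  - assert (HQ : Permutation (Imp x y :: GG) (Var p :: G)) by (rewrite <- HG; auto).
    sp1 HQ; [discriminate|]. eapply h_init with (G := y :: G0). psolve.
  - assert (HQ : Permutation (Imp x y :: GG) (Bot :: G)) by (rewrite <- HG; auto).
    sp1 HQ; [discriminate|]. eapply h_bot with (G := y :: G0). psolve.
  - assert (HQ : Permutation (Imp x y :: GG) (And a b :: G)) by (rewrite <- HG; auto).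
    sp1 HQ; [discriminate|].
    eapply h_andL with (G := y :: G0) (a := a) (b := b); [psolve|].
    eapply perm_h; [apply (IHSDh x y (a :: b :: G0))|]; psolve.
  - apply h_andR; eauto.
  - assert (HQ : Permutation (Imp x y :: GG) (Or a b :: G)) by (rewrite <- HG; auto).
    sp1 HQ; [discriminate|].
    eapply h_orL with (G := y :: G0) (a := a) (b := b); [psolve| |].
    + eapply perm_h; [apply (IHSDh1 x y (a :: G0))|]; psolve.
    + eapply perm_h; [apply (IHSDh2 x y (b :: G0))|]; psolve.
  - apply h_orR1; eauto.
  - apply h_orR2; eauto.
  - apply h_impR. eapply perm_h; [apply (IHSDh x y (a :: GG))|]; psolve.
  - assert (HQ : Permutation (Imp x y :: GG) (Imp a b :: G)) by (rewrite <- HG; auto).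
    sp1 HQ.
    + injection E; intros; subst. eapply perm_h; [apply lift_h; eauto|]. psolve.
    + eapply h_impL with (G := y :: G0) (a := a) (b := b); [psolve| |].
      * eapply perm_h; [apply (IHSDh1 x y (Imp a b :: G0))|]; psolve.
      * eapply perm_h; [apply (IHSDh2 x y (b :: G0))|]; psolve.
  - assert (HQ : Permutation (Imp x y :: GG) (map sim l ++ G)) by (rewrite <- HG; auto).
    sp2 HQ; [|discriminate].
    eapply h_box with (G := y :: G0) (l := l); eauto. psolve.
Qed.

Lemma P3 (X : formula) G Y G1 : Permutation (X :: X :: G) (Y :: G1) ->
  (Y = X /\ Permutation G1 (X :: G)) \/ (exists G0, Permutation G1 (X :: X :: G0) /\ Permutation G (Y :: G0)).
Proof.
  intros HP. destruct (P1 _ _ _ _ HP) as [[E HA]|[G0 [HA HB]]].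
  - left; subst; split; auto. symmetry; auto.
  - destruct (P1 _ _ _ _ HB) as [[E HC]|[G2 [HC HD]]].
    + left. subst. split; auto. rewrite HA. psolve.
    + right. exists G2. split; [rewrite HA, HC; psolve | auto].
Qed.

Lemma sim_inj rs rs' : sim rs = sim rs' -> rs = rs'.
Proof. destruct rs, rs'; unfold sim; simpl; intros H; injection H; intros; subst; auto. Qed.

Lemma P4 (X : formula) G l G1 : Permutation (X :: X :: G) (map sim l ++ G1) ->
  (exists G0, Permutation G1 (X :: G0) /\ Permutation (X :: G) (map sim l ++ G0)) \/
  (exists rs l0, X = sim rs /\ Permutation l (rs :: rs :: l0) /\ Permutation G (map sim l0 ++ G1)).
Proof.
  intros HP. destruct (P2 _ _ _ _ HP) as [[G0 [HA HB]]|[rs [l0 [E [HA HB]]]]].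
  - left. exists G0. auto.
  - destruct (P2 _ _ _ _ HB) as [[G2 [HC HD]]|[rs' [l1 [E' [HC HD]]]]].
    + left. exists G2. split; auto. rewrite HA. simpl. subst X. rewrite HD. psolve.
    + right. subst. apply sim_inj in E'. subst. exists rs', l1. split; auto. split; auto.
      rewrite HA, HC. auto.
Qed.

Lemma contr_h n : forall G' X G D, SDh n G' D -> Permutation G' (X :: X :: G) -> SDh n (X :: G) D.
Proof.
  induction n as [|n IH]; intros G' X GG D H HG.
  - inversion H; subst.
    + assert (HQ : Permutation (X :: X :: GG) (Var p :: G)) by (rewrite <- HG; auto).
      apply P3 in HQ as [[E HQ]|[G0 [HQ1 HQ2]]].
      * subst. eapply h_init with (G := GG); auto.
      * eapply h_init with (G := X :: G0). psolve.
    + assert (HQ : Permutation (X :: X :: GG) (Bot :: G)) by (rewrite <- HG; auto).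
      apply P3 in HQ as [[E HQ]|[G0 [HQ1 HQ2]]].
      * subst. eapply h_bot with (G := GG); auto.
      * eapply h_bot with (G := X :: G0). psolve.
  - inversion H; subst.
    + assert (HQ : Permutation (X :: X :: GG) (Var p :: G)) by (rewrite <- HG; auto).
      apply P3 in HQ as [[E HQ]|[G0 [HQ1 HQ2]]].
      * subst. eapply h_init with (G := GG); auto.
      * eapply h_init with (G := X :: G0). psolve.
    + assert (HQ : Permutation (X :: X :: GG) (Bot :: G)) by (rewrite <- HG; auto).
      apply P3 in HQ as [[E HQ]|[G0 [HQ1 HQ2]]].
      * subst. eapply h_bot with (G := GG); auto.
      * eapply h_bot with (G := X :: G0). psolve.
    +
      assert (HQ : Permutation (X :: X :: GG) (And a b :: G)) by (rewrite <- HG; auto).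
      apply P3 in HQ as [[E HQ]|[G0 [HQ1 HQ2]]].
      * subst X. eapply h_andL with (G := GG) (a := a) (b := b); [auto|].
        assert (Hx : SDh n (a :: b :: a :: b :: GG) D).
        { eapply inv_and; [eassumption|]. rewrite HQ. psolve. }
        apply (IH _ a (b :: b :: GG)) in Hx; [|psolve].
        apply (IH _ b (a :: GG)) in Hx; [|psolve].
        eapply perm_h; [exact Hx|]. psolve.
      * eapply h_andL with (G := X :: G0) (a := a) (b := b); [psolve|].
        eapply perm_h; [apply (IH (a :: b :: G) X (a :: b :: G0)); auto|]; [rewrite HQ1|]; psolve.
    + apply h_andR; eapply IH; eauto.
    +
      assert (HQ : Permutation (X :: X :: GG) (Or a b :: G)) by (rewrite <- HG; auto).
      apply P3 in HQ as [[E HQ]|[G0 [HQ1 HQ2]]].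
      * subst X. eapply h_orL with (G := GG) (a := a) (b := b); [auto| |].
        -- assert (Hx : SDh n (a :: a :: GG) D).
           { eapply (inv_or _ _ _ H2 a b); rewrite HQ; psolve. }
           eapply IH; [exact Hx|]. auto.
        -- assert (Hx : SDh n (b :: b :: GG) D).
           { eapply (inv_or _ _ _ H3 a b); rewrite HQ; psolve. }
           eapply IH; [exact Hx|]. auto.
      * eapply h_orL with (G := X :: G0) (a := a) (b := b); [psolve| |].
        -- eapply perm_h; [apply (IH (a :: G) X (a :: G0)); auto|]; [rewrite HQ1|]; psolve.
        -- eapply perm_h; [apply (IH (b :: G) X (b :: G0)); auto|]; [rewrite HQ1|]; psolve.
    + apply h_orR1; eapply IH; eauto.
    + apply h_orR2; eapply IH; eauto.
    + apply h_impR. eapply perm_h; [apply (IH (a :: G') X (a :: GG)); auto|]; [rewrite HG|]; psolve.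
    +
      assert (HQ : Permutation (X :: X :: GG) (Imp a b :: G)) by (rewrite <- HG; auto).
      apply P3 in HQ as [[E HQ]|[G0 [HQ1 HQ2]]].
      * subst X. eapply h_impL with (G := GG) (a := a) (b := b); [auto| |].
        -- eapply IH; [exact H2|]. rewrite HQ. auto.
        -- assert (Hx : SDh n (b :: b :: GG) D).
           { eapply (inv_impL _ _ _ H3 a b). rewrite HQ. psolve. }
           eapply IH; [exact Hx|]. auto.
      * eapply h_impL with (G := X :: G0) (a := a) (b := b); [psolve| |].
        -- eapply perm_h; [apply (IH (Imp a b :: G) X (Imp a b :: G0)); auto|]; [rewrite HQ1|]; psolve.
        -- eapply perm_h; [apply (IH (b :: G) X (b :: G0)); auto|]; [rewrite HQ1|]; psolve.
    +
      assert (HQ : Permutation (X :: X :: GG) (map sim l ++ G)) by (rewrite <- HG; auto).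
      apply P4 in HQ as [[G0 [HQ1 HQ2]]|[rs [l0 [E [HQ1 HQ2]]]]].
      * eapply h_box with (G := G0) (l := l); eauto.
      * eapply h_box with (G := G) (l := rs :: l0).
        -- subst X. rewrite HQ2. simpl. auto.
        -- intros rs' Hin. apply H2. eapply Permutation_in; [symmetry; exact HQ1|].
           destruct Hin; [left; auto | right; right; auto].
        -- simpl. eapply (IH (map snd l)); [exact H3|].
           apply (Permutation_map snd) in HQ1. exact HQ1.
Qed.

Lemma contr_S G X D : SDer (X :: X :: G) D -> SDer (X :: G) D.
Proof.
  intros H. apply S_to_h in H as [n Hn]. eapply h_to_S. eapply contr_h; eauto.
Qed.

Lemma perm_S G G' D : SDer G D -> Permutation G G' -> SDer G' D.
Proof.
  intros H HP. apply S_to_h in H as [n Hn]. eapply h_to_S. eapply perm_h; eauto.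
Qed.

Lemma wk_S G D X : SDer G D -> SDer (X :: G) D.
Proof. intros H. apply S_to_h in H as [n Hn]. eapply h_to_S. eapply wk_h; eauto. Qed.

Lemma wkl_S G D L : SDer G D -> SDer (L ++ G) D.
Proof. intros H. induction L; simpl; auto using wk_S. Qed.

Lemma wkr_S G D L : SDer G D -> SDer (G ++ L) D.
Proof. intros H. eapply perm_S; [apply (wkl_S G D L H)|]. apply Permutation_app_comm. Qed.

Lemma contrl_S : forall L G D, (forall x, In x L -> In x G) -> SDer (L ++ G) D -> SDer G D.
Proof.
  induction L as [|x L IHL]; intros G D Hsub H; simpl in *; auto.
  apply IHL; [intros; apply Hsub; auto|].
  assert (Hin : In x G) by auto.
  apply in_split in Hin as [G1 [G2 ->]].
  assert (H2 : SDer (x :: x :: L ++ G1 ++ G2) D) by (eapply perm_S; [exact H|]; psolve).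
  apply contr_S in H2. eapply perm_S; [exact H2|]. psolve.
Qed.

Fixpoint fsize (A : formula) : nat :=
  match A with
  | Var _ | Bot => 1
  | And a b | Or a b | Imp a b | SImp a b => S (fsize a + fsize b)
  end.

Definition RI (G : list formula) (A : formula) : Prop :=
  match A with
  | And a b => SDer G (Some a) /\ SDer G (Some b)
  | Or a b => SDer G (Some a) \/ SDer G (Some b)
  | Imp a b => SDer (a :: G) (Some b)
  | SImp a b => exists G0 l, Permutation G (map sim l ++ G0) /\
      (forall rs, In rs l -> SDer [a] (Some (fst rs)) /\ SDer [fst rs] (Some a)) /\
      SDer (map snd l) (Some b)
  | _ => False
  end.

Lemma cut_inner A
  (CUT : forall A', fsize A' < fsize A -> forall G D, SDer G (Some A') -> SDer (A' :: G) D -> SDer G D) :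
  forall h n m G D, n + m = h -> SDh n G (Some A) -> SDh m (A :: G) D -> SDer G D.
Proof.
  intros h. induction h as [h IHh] using (well_founded_induction lt_wf).
  intros n m G D Hh Hl Hr.
  assert (LR : RI G A \/ SDer G D).
  { inversion Hl; subst.
    - right.
      assert (Hx : SDh m (Var p :: Var p :: G0) D) by (eapply perm_h; [exact Hr|]; psolve).
      pose proof (contr_h _ _ (Var p) G0 D Hx (Permutation_refl _)) as Hy.
      eapply h_to_S. eapply perm_h; [exact Hy|]. symmetry; auto.
    - right. eapply S_botL; eauto.
    - right. rename n0 into n'.
      assert (Hx : SDh m (a :: b :: A :: G0) D) by (eapply (inv_and _ _ _ Hr a b); rewrite H; psolve).
      eapply S_andL; [eassumption|].
      eapply (IHh (n' + m)); [lia | reflexivity | eassumption | ].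
      eapply perm_h; [exact Hx|]; psolve.
    - left. simpl. split; eapply h_to_S; eauto.
    - right. rename n0 into n'.
      destruct (inv_or _ _ _ Hr a b (A :: G0)) as [Hx Hy]; [rewrite H; psolve|].
      eapply S_orL; [eassumption| |].
      + eapply (IHh (n' + m)); [lia | reflexivity | eassumption | ].
        eapply perm_h; [exact Hx|]; psolve.
      + eapply (IHh (n' + m)); [lia | reflexivity | eassumption | ].
        eapply perm_h; [exact Hy|]; psolve.
    - left. simpl. left. eapply h_to_S; eauto.
    - left. simpl. right. eapply h_to_S; eauto.
    - left. simpl. eapply h_to_S; eauto.
    - right. rename n0 into n'.
      assert (Hx : SDh m (b :: A :: G0) D) by (eapply (inv_impL _ _ _ Hr a b); rewrite H; psolve).
      eapply S_impL; [eassumption| eapply h_to_S; eassumption |].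
      eapply (IHh (n' + m)); [lia | reflexivity | eassumption | ].
      eapply perm_h; [exact Hx|]; psolve.
    - left. simpl. exists G0, l. split; [auto|]. split; [auto|]. eapply h_to_S; eauto.
  }
  destruct LR as [RIA | Done]; [|exact Done].
  inversion Hr; subst.
  -
    destruct (P1 _ _ _ _ H) as [[E HA]|[G1 [HA HB]]]; [subst A; destruct RIA|].
    eapply S_init; eauto.
  - destruct (P1 _ _ _ _ H) as [[E HA]|[G1 [HA HB]]]; [subst A; destruct RIA|].
    eapply S_botL; eauto.
  -
    destruct (P1 _ _ _ _ H) as [[E HA]|[G1 [HA HB]]].
    + subst A. destruct RIA as [Ha Hb].
      eapply (CUT a); [simpl; lia | exact Ha |].
      eapply (CUT b); [simpl; lia | apply wk_S; exact Hb |].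
      eapply perm_S; [eapply h_to_S; exact H0|]. rewrite HA. psolve.
    + assert (Hx : SDh n (a :: b :: G1) (Some A)) by (eapply (inv_and _ _ _ Hl a b); exact HB).
      eapply S_andL; [exact HB|].
      eapply (IHh (n + n0)); [lia | reflexivity | exact Hx |].
      eapply perm_h; [exact H0|]. rewrite HA. psolve.
  - apply S_andR.
    + eapply (IHh (n + n0)); [lia | reflexivity | exact Hl | eauto].
    + eapply (IHh (n + n0)); [lia | reflexivity | exact Hl | eauto].
  -
    destruct (P1 _ _ _ _ H) as [[E HA]|[G1 [HA HB]]].
    + subst A. destruct RIA as [Ha | Hb].
      * eapply (CUT a); [simpl; lia | exact Ha |].
        eapply perm_S; [eapply h_to_S; exact H0|]. rewrite HA. psolve.
      * eapply (CUT b); [simpl; lia | exact Hb |].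
        eapply perm_S; [eapply h_to_S; exact H1|]. rewrite HA. psolve.
    + destruct (inv_or _ _ _ Hl a b G1 HB) as [Hx Hy].
      eapply S_orL; [exact HB| |].
      * eapply (IHh (n + n0)); [lia | reflexivity | exact Hx |].
        eapply perm_h; [exact H0|]. rewrite HA. psolve.
      * eapply (IHh (n + n0)); [lia | reflexivity | exact Hy |].
        eapply perm_h; [exact H1|]. rewrite HA. psolve.
  - apply S_orR1. eapply (IHh (n + n0)); [lia | reflexivity | exact Hl | eauto].
  - apply S_orR2. eapply (IHh (n + n0)); [lia | reflexivity | exact Hl | eauto].
  - apply S_impR. eapply (IHh (n + n0)); [lia | reflexivity | apply (wk_h _ _ _ Hl a) |].
    eapply perm_h; [eassumption|]. psolve.
  -
    destruct (P1 _ _ _ _ H) as [[E HA]|[G1 [HA HB]]].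
    + subst A. simpl in RIA.
      assert (Ha : SDer G (Some a)).
      { eapply (IHh (n + n0)); [lia | reflexivity | exact Hl |].
        eapply perm_h; [exact H0|]. rewrite HA. psolve. }
      assert (Hb : SDer G (Some b)) by (eapply (CUT a); [simpl; lia | exact Ha | exact RIA]).
      eapply (CUT b); [simpl; lia | exact Hb |].
      eapply perm_S; [eapply h_to_S; exact H1|]. rewrite HA. psolve.
    + assert (Hx : SDh n (b :: G1) (Some A)) by (eapply (inv_impL _ _ _ Hl a b); exact HB).
      assert (Hy : SDh n (Imp a b :: G1) (Some A)) by (eapply perm_h; [exact Hl| exact HB]).
      eapply S_impL; [exact HB| |].
      * eapply (IHh (n + n0)); [lia | reflexivity | exact Hy |].
        eapply perm_h; [exact H0|]. rewrite HA. psolve.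
      * eapply (IHh (n + n0)); [lia | reflexivity | exact Hx |].
        eapply perm_h; [exact H1|]. rewrite HA. psolve.
  -
    destruct (P2 _ _ _ _ H) as [[G1 [HA HB]]|[rs [l0 [E [HA HB]]]]].
    + eapply S_box; [exact HB | exact H0 | eapply h_to_S; exact H1].
    + subst A. destruct rs as [r s]. change (sim (r, s)) with (SImp r s) in RIA; simpl in RIA.
      destruct RIA as [G2 [l' [HC [HS HM]]]].
      assert (Hrs : In (r, s) l) by (eapply Permutation_in; [symmetry; exact HA| left; auto]).
      destruct (H0 _ Hrs) as [Har Hra]. simpl in Har, Hra.
      apply (contrl_S G); [auto|].
      eapply S_box with (l := l' ++ l0) (G := G2 ++ G0).
      * change (fun rs : formula * formula => SImp (fst rs) (snd rs)) with sim. rewrite map_app. psolve.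
      * intros rs' Hin. apply in_app_or in Hin as [Hin|Hin].
        -- destruct (HS _ Hin) as [H3 H4]. split.
           ++ eapply (CUT r); [simpl; lia | exact Har |].
              eapply perm_S; [apply (wk_S _ _ a H3)|]. apply perm_swap.
           ++ eapply (CUT r); [simpl; lia | exact H4 |].
              eapply perm_S; [apply (wk_S _ _ (fst rs') Hra)|]. apply perm_swap.
        -- apply H0. eapply Permutation_in; [symmetry; exact HA| right; auto].
      * rewrite map_app. eapply (CUT s); [simpl; lia | apply wkr_S; exact HM |].
        apply (Permutation_map snd) in HA. simpl in HA.
        eapply perm_S; [apply (wkl_S _ _ (map snd l') (h_to_S _ _ _ H1))|].
        rewrite HA. psolve.
Qed.

Lemma cut_k k : forall A, fsize A <= k -> forall G D, SDer G (Some A) -> SDer (A :: G) D -> SDer G D.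
Proof.
  induction k as [|k IHk]; intros A HA G D Hl Hr.
  - destruct A; simpl in HA; lia.
  - apply S_to_h in Hl as [n Hn]. apply S_to_h in Hr as [m Hm].
    eapply (cut_inner A); [| reflexivity | exact Hn | exact Hm].
    intros A' HA'. apply IHk. lia.
Qed.

Lemma cut G A D : SDer G (Some A) -> SDer (A :: G) D -> SDer G D.
Proof. apply (cut_k (fsize A)). lia. Qed.

Lemma idS A : forall G, SDer (A :: G) (Some A).
Proof.
  induction A as [p| |a IHa b IHb|a IHa b IHb|a IHa b IHb|a IHa b IHb]; intros G.
  - eapply S_init; eauto.
  - eapply S_botL; eauto.
  - eapply S_andL; [apply Permutation_refl|]. apply S_andR; auto.
    eapply perm_S; [apply (IHb (a :: G))|]. apply perm_swap.
  - eapply S_orL; [apply Permutation_refl| |].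
    + apply S_orR1; auto.
    + apply S_orR2; auto.
  - apply S_impR. eapply S_impL with (G := a :: G); [apply perm_swap| |].
    + eapply perm_S; [apply (IHa (Imp a b :: G))|]. apply perm_swap.
    + auto.
  - eapply S_box with (l := [(a, b)]) (G := G).
    + simpl. apply Permutation_refl.
    + intros rs [<-|[]]; simpl; split; auto.
    + simpl; auto.
Qed.

Lemma hyp G a : In a G -> SDer G (Some a).
Proof.
  intros Hin. apply in_split in Hin as [L1 [L2 ->]].
  eapply perm_S; [apply (idS a (L1 ++ L2))|]. apply Permutation_middle.
Qed.

Lemma mp_ctx G a b : In (Imp a b) G -> SDer G (Some a) -> SDer G (Some b).
Proof.
  intros Hin Ha. apply in_split in Hin as [L1 [L2 ->]].
  eapply S_impL with (G := L1 ++ L2); [symmetry; apply Permutation_middle| |].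
  - eapply perm_S; [exact Ha|]. symmetry; apply Permutation_middle.
  - apply idS.
Qed.

Lemma mp_cut G a b : SDer G (Some (Imp a b)) -> SDer G (Some a) -> SDer G (Some b).
Proof.
  intros H1 H2. eapply cut; [exact H1|]. apply mp_ctx with (a := a); [left; auto|]. apply wk_S; auto.
Qed.

Lemma and_inv1 G a b : SDer G (Some (And a b)) -> SDer G (Some a).
Proof.
  intros H. eapply cut; [exact H|]. eapply S_andL; [apply Permutation_refl|]. apply idS.
Qed.

Lemma and_inv2 G a b : SDer G (Some (And a b)) -> SDer G (Some b).
Proof.
  intros H. eapply cut; [exact H|]. eapply S_andL; [apply Permutation_refl|]. apply hyp; simpl; auto.
Qed.

Lemma imp_inv G a b : SDer G (Some (Imp a b)) -> SDer (a :: G) (Some b).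
Proof.
  intros H. eapply mp_cut; [apply wk_S; exact H|]. apply idS.
Qed.

Lemma iff_box a r b : SDer [a] (Some r) -> SDer [r] (Some a) -> SDer [SImp a b] (Some (SImp r b)).
Proof.
  intros H1 H2. eapply S_box with (l := [(a, b)]) (G := []).
  - simpl. apply Permutation_refl.
  - intros rs [<-|[]]; simpl; split; auto.
  - simpl. apply idS.
Qed.

Lemma topS G : SDer G (Some Top).
Proof. apply S_impR. eapply S_botL; apply Permutation_refl. Qed.

Lemma H_to_S phi : HDer phi -> SDer [] (Some phi).
Proof.
  induction 1.
  - apply S_impR, S_impR. apply hyp; simpl; auto.
  - apply S_impR, S_impR, S_impR.
    eapply mp_cut.
    + apply mp_ctx with (a := a); [simpl; auto | apply hyp; simpl; auto].
    + apply mp_ctx with (a := a); [simpl; auto | apply hyp; simpl; auto].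
  - apply S_impR. eapply S_andL; [apply Permutation_refl|]. apply hyp; simpl; auto.
  - apply S_impR. eapply S_andL; [apply Permutation_refl|]. apply hyp; simpl; auto.
  - apply S_impR, S_impR. apply S_andR; apply hyp; simpl; auto.
  - apply S_impR, S_orR1, hyp; simpl; auto.
  - apply S_impR, S_orR2, hyp; simpl; auto.
  - apply S_impR, S_impR, S_impR.
    eapply S_orL; [apply Permutation_refl| |].
    + apply mp_ctx with (a := a); [simpl; auto | apply hyp; simpl; auto].
    + apply mp_ctx with (a := b); [simpl; auto | apply hyp; simpl; auto].
  - apply S_impR. eapply S_botL; apply Permutation_refl.
  - eapply mp_cut; eauto.
  - pose proof (imp_inv _ _ _ (and_inv1 _ _ _ IHHDer)) as H1.
    pose proof (imp_inv _ _ _ (and_inv2 _ _ _ IHHDer)) as H2.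
    apply S_andR; apply S_impR; apply iff_box; auto.
  - pose proof (imp_inv _ _ _ (and_inv1 _ _ _ IHHDer)) as H1.
    pose proof (imp_inv _ _ _ (and_inv2 _ _ _ IHHDer)) as H2.
    apply S_andR; apply S_impR.
    + eapply S_box with (l := [(a, b)]) (G := []).
      * simpl. apply Permutation_refl.
      * intros rs [<-|[]]; simpl; split; apply idS.
      * simpl. auto.
    + eapply S_box with (l := [(a, c)]) (G := []).
      * simpl. apply Permutation_refl.
      * intros rs [<-|[]]; simpl; split; apply idS.
      * simpl. auto.
  - apply S_impR. apply S_andR.
    + eapply S_box with (l := [(a, And b c)]) (G := []).
      * simpl. apply Permutation_refl.
      * intros rs [<-|[]]; simpl; split; apply idS.
      * simpl. eapply S_andL; [apply Permutation_refl|]. apply idS.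
    + eapply S_box with (l := [(a, And b c)]) (G := []).
      * simpl. apply Permutation_refl.
      * intros rs [<-|[]]; simpl; split; apply idS.
      * simpl. eapply S_andL; [apply Permutation_refl|]. apply hyp; simpl; auto.
  - apply S_impR. eapply S_andL; [apply Permutation_refl|].
    eapply S_box with (l := [(a, b); (a, c)]) (G := []).
    + simpl. apply Permutation_refl.
    + intros rs [<-|[<-|[]]]; simpl; split; apply idS.
    + simpl. apply S_andR; apply hyp; simpl; auto.
  - eapply S_box with (l := []) (G := []).
    + simpl. apply Permutation_refl.
    + intros rs [].
    + simpl. apply topS.
Qed.

Lemma big_and_S G : SDer G (Some (big_and G)).
Proof.
  induction G as [|x G IH]; [apply topS|].
  destruct G as [|y G'].
  - simpl. apply idS.
  - change (big_and (x :: y :: G')) with (And x (big_and (y :: G'))).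
    apply S_andR; [apply idS | apply wk_S; exact IH].
Qed.

Lemma complete G D : HDer (iota G D) -> SDer G D.
Proof.
  intros H. apply H_to_S in H.
  assert (HB : SDer G (Some (big_or D))).
  { destruct G as [|x G'].
    - exact H.
    - simpl in H. apply imp_inv in H.
      eapply cut; [apply big_and_S|].
      apply (wkr_S _ _ (x :: G')) in H. exact H. }
  destruct D as [a|]; [exact HB|].
  eapply cut; [exact HB|]. eapply S_botL; apply Permutation_refl.
Qed.

Inductive HD (Γ : list formula) : formula -> Prop :=
| hd_hyp a : In a Γ -> HD Γ a
| hd_thm a : HDer a -> HD Γ a
| hd_mp a b : HD Γ (Imp a b) -> HD Γ a -> HD Γ b.

Lemma HI a : HDer (Imp a a).
Proof.
  eapply MP; [eapply MP; [apply (A2 a (Imp a a) a) | apply A1] | apply A1].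
Qed.

Lemma ded Γ a b : HD (a :: Γ) b -> HD Γ (Imp a b).
Proof.
  induction 1 as [x Hin|x Hx|x y _ IH1 _ IH2].
  - destruct Hin as [<-|Hin].
    + apply hd_thm, HI.
    + eapply hd_mp; [apply hd_thm, A1 | apply hd_hyp; auto].
  - eapply hd_mp; [apply hd_thm, A1 | apply hd_thm; auto].
  - eapply hd_mp; [eapply hd_mp; [apply hd_thm, A2 | exact IH1] | exact IH2].
Qed.

Lemma closed a : HD [] a -> HDer a.
Proof.
  induction 1 as [x []|x Hx|x y _ IH1 _ IH2]; auto. eapply MP; eauto.
Qed.

Lemma hd_subst Δ Γ phi : HD Δ phi -> (forall psi, In psi Δ -> HD Γ psi) -> HD Γ phi.
Proof.
  induction 1; intros Hs; auto.
  - apply hd_thm; auto.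
  - eapply hd_mp; eauto.
Qed.

Lemma hd_weak Δ Γ phi : HD Δ phi -> (forall psi, In psi Δ -> In psi Γ) -> HD Γ phi.
Proof. intros H Hs. eapply hd_subst; [exact H|]. intros; apply hd_hyp; auto. Qed.

Lemma hd_mp' Γ a b : HDer (Imp a b) -> HD Γ a -> HD Γ b.
Proof. intros H1 H2. eapply hd_mp; [apply hd_thm; exact H1 | exact H2]. Qed.

Lemma hd_and Γ x y : HD Γ x -> HD Γ y -> HD Γ (And x y).
Proof. intros H1 H2. eapply hd_mp; [eapply hd_mp'; [apply A5 | exact H1] | exact H2]. Qed.

Lemma Htop : HDer Top.
Proof. apply HI. Qed.

Lemma mono x y c : HDer (Imp x y) -> HDer (Imp (SImp c x) (SImp c y)).
Proof.
  intros Hxy.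
  assert (Hiff : HDer (Iff x (And x y))).
  { apply closed. apply hd_and.
    - apply ded. apply hd_and; [apply hd_hyp; left; auto|].
      eapply hd_mp'; [exact Hxy | apply hd_hyp; left; auto].
    - apply hd_thm, A3. }
  apply (RC c) in Hiff.
  apply closed, ded.
  eapply hd_mp'; [apply A4|].
  eapply hd_mp'; [apply CM|].
  eapply hd_mp; [| apply hd_hyp; left; reflexivity].
  eapply hd_mp'; [apply A3 | apply hd_thm; exact Hiff].
Qed.

Lemma boxH a : forall l b, (forall rs, In rs l -> HDer (Imp a (fst rs)) /\ HDer (Imp (fst rs) a)) ->
  HD (map snd l) b -> HD (map sim l) (SImp a b).
Proof.
  induction l as [|[r s] l0 IH]; intros b Hs Hb; simpl in *.
  - apply closed in Hb. apply hd_thm.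
    assert (Hiff : HDer (Iff Top b)).
    { apply closed. apply hd_and.
      - apply ded. apply hd_thm; auto.
      - apply ded. apply hd_thm, Htop. }
    apply (RC a) in Hiff.
    eapply MP; [eapply MP; [apply A3 | exact Hiff] | apply CN].
  - apply ded in Hb. apply IH in Hb; [| intros; apply Hs; auto].
    destruct (Hs (r, s) (or_introl eq_refl)) as [Har Hra]. simpl in Har, Hra.
    assert (Hiff : HDer (Iff a r)) by (apply closed, hd_and; apply hd_thm; auto).
    apply (RA a r s) in Hiff.
    assert (H1 : HD (sim (r, s) :: map sim l0) (SImp a s)).
    { eapply hd_mp'; [eapply MP; [apply A4 | exact Hiff] | apply hd_hyp; left; reflexivity]. }
    assert (H2 : HD (sim (r, s) :: map sim l0) (SImp a (Imp s b))).
    { eapply hd_weak; [exact Hb|]. intros; right; auto. }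
    eapply hd_mp'; [apply mono|].
    2: { eapply hd_mp'; [apply CC | apply hd_and; [exact H1 | exact H2]]. }
    apply closed, ded. eapply hd_mp.
    + eapply hd_mp'; [apply A4 | apply hd_hyp; left; reflexivity].
    + eapply hd_mp'; [apply A3 | apply hd_hyp; left; reflexivity].
Qed.

Lemma perm_in {G G' : list formula} x : Permutation G G' -> In x G -> In x G'.
Proof. intros; eapply Permutation_in; eauto. Qed.

Lemma sound : forall G D, SDer G D -> HD G (big_or D).
Proof.
  fix IH 3. intros G0 D0 d. destruct d.
  - apply hd_hyp. eapply perm_in; [symmetry; exact H| left; auto].
  - eapply hd_mp'; [apply A9|]. apply hd_hyp. eapply perm_in; [symmetry; exact H| left; auto].
  - pose proof (IH _ _ d) as HH. eapply hd_subst; [exact HH|].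
    intros psi [<-|[<-|Hin]].
    + eapply hd_mp'; [apply A3|]. apply hd_hyp. eapply perm_in; [symmetry; exact H| left; auto].
    + eapply hd_mp'; [apply A4|]. apply hd_hyp. eapply perm_in; [symmetry; exact H| left; auto].
    + apply hd_hyp. eapply perm_in; [symmetry; exact H| right; auto].
  - simpl. apply hd_and; [exact (IH _ _ d1) | exact (IH _ _ d2)].
  - pose proof (ded _ _ _ (IH _ _ d1)) as H1. pose proof (ded _ _ _ (IH _ _ d2)) as H2.
    assert (Hw : forall phi, HD G phi -> HD G' phi).
    { intros phi Hp. eapply hd_weak; [exact Hp|]. intros. eapply perm_in; [symmetry; exact H| right; auto]. }
    eapply hd_mp; [eapply hd_mp; [eapply hd_mp; [apply hd_thm, A8 | apply Hw, H1] | apply Hw, H2] |].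
    apply hd_hyp. eapply perm_in; [symmetry; exact H| left; auto].
  - simpl. eapply hd_mp'; [apply A6 | exact (IH _ _ d)].
  - simpl. eapply hd_mp'; [apply A7 | exact (IH _ _ d)].
  - simpl. apply ded. exact (IH _ _ d).
  - pose proof (IH _ _ d1) as H1. pose proof (IH _ _ d2) as H2. simpl in H1.
    assert (Ha : HD G' a).
    { eapply hd_weak; [exact H1|]. intros psi [<-|Hin]; eapply perm_in; try (symmetry; exact H); [left; auto | right; auto]. }
    assert (Hb : HD G' b).
    { eapply hd_mp; [| exact Ha]. apply hd_hyp. eapply perm_in; [symmetry; exact H| left; auto]. }
    eapply hd_subst; [exact H2|]. intros psi [<-|Hin]; [exact Hb|].
    apply hd_hyp. eapply perm_in; [symmetry; exact H| right; auto].
  - assert (Hs : forall rs, In rs l -> HDer (Imp a (fst rs)) /\ HDer (Imp (fst rs) a)).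
    { intros rs Hin. destruct (H0 rs Hin) as [s1 s2].
      split; apply closed, ded; [exact (IH _ _ s1) | exact (IH _ _ s2)]. }
    pose proof (boxH a l b Hs (IH _ _ d)) as HH.
    eapply hd_weak; [exact HH|]. intros psi Hin.
    eapply perm_in; [symmetry; exact H|]. apply in_or_app; left. exact Hin.
Qed.

Lemma big_and_hd : forall G psi, In psi G -> HD [big_and G] psi.
Proof.
  induction G as [|x G IH]; intros psi Hin; [destruct Hin|].
  destruct G as [|y G'].
  - destruct Hin as [<-|[]]. apply hd_hyp; left; auto.
  - change (big_and (x :: y :: G')) with (And x (big_and (y :: G'))).
    destruct Hin as [<-|Hin].
    + eapply hd_mp'; [apply A3 | apply hd_hyp; left; auto].
    + eapply hd_subst; [apply IH; exact Hin|]. intros z [<-|[]].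
      eapply hd_mp'; [apply A4 | apply hd_hyp; left; auto].
Qed.

Lemma to_iota G x : HD G x -> HDer (iota G (Some x)).
Proof.
  intros H. destruct G as [|y G'].
  - apply closed; auto.
  - simpl. apply closed, ded. eapply hd_subst; [exact H|]. apply big_and_hd.
Qed.

Lemma soundness G D : SDer G D -> HDer (iota G D).
Proof.
  intros H. apply sound in H. destruct D as [x|].
  - apply to_iota; auto.
  - apply (to_iota G Bot) in H. destruct G; auto.
Qed.

Theorem theorem7 (G : list formula) (D : option formula) :
  SDer G D <-> HDer (iota G D).
Proof.
  split; [apply soundness | apply complete].
Qed.
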